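(* Let $V$ be an $n$-dimensional real inner product space, $r\ge0$, and $P$ a monopolar $k$-chain in $V$. Then $|\perp P|^{\natural_r}=|P|^{\natural_r}$.
   Context: For a simple $k$-vector $\alpha=w_1\wedge\dots\wedge w_k$, $M(\alpha)=\sqrt{\det\langle w_i,w_j\rangle}$. For simple $\alpha$, $\perp\alpha$ is the simple $(n-k)$-vector with $M(\perp\alpha)=M(\alpha)$ whose subspace is the orthogonal complement of the span of $\alpha$, oriented so that $\alpha\wedge\perp\alpha$ is a positive multiple of $e_1\wedge\dots\wedge e_n$ for a fixed oriented orthonormal basis; $\perp$ is extended linearly. A monopolar $k$-chain is a finite formal sum $P=\sum_i(p_i;\alpha_i)$, linear in the second slot at each point; $\perp P=\sum_i(p_i;\perp\alpha_i)$. $T_u(p;\alpha)=(p+u;\alpha)$, $\Delta_u=T_u-\mathrm{id}$, $\Delta^j_U=\Delta_{u_1}\circ\dots\circ\Delta_{u_j}$, $\|\Delta^j_U(p;\alpha)\|_j=|u_1|\cdots|u_j|M(\alpha)$. A $k$-form is a linear functional $\omega$ on monopolar $k$-chains; $\|\omega\|_0=\sup\{|\omega(p;\alpha)|:\alpha$ simple, $M(\alpha)=1\}$, $\|\omega\|_j=\sup\{|\omega(\Delta^j_U(p;\alpha))|:\|\Delta^j_U(p;\alpha)\|_j=1\}$, $|\omega|^{\natural_r}=\max_{0\le j\le r}\|\omega\|_j$, $\mathcal B_k^r$ = forms with finite norm. For a monopolar $m$-chain $Q$, $|Q|^{\natural_r}=\sup_{0\ne\omega\in\mathcal B_m^r}\omega(Q)/|\omega|^{\natural_r}$.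 *)

(* Defs.v *)
From HB Require Import structures.
From mathcomp Require Import all_boot all_order all_algebra.
From mathcomp Require Import all_classical all_reals ereal.
From Stdlib Require Import ClassicalEpsilon.

Set Implicit Arguments.
Unset Strict Implicit.
Unset Printing Implicit Defensive.

Import Order.TTheory GRing.Theory Num.Theory.
Local Open Scope ring_scope.

(* Index set of the standard basis of Lambda_k(R^n): k-subsets of 'I_n.
   e_S = e_{s_1} /\ ... /\ e_{s_k} with s_1 < ... < s_k. *)
Notation ksub n k := {S : {set 'I_n} | #|S| == k}.

(* k-vectors in R^n: coordinates on the basis e_S. *)
Notation kvec R n k := {ffun ksub n k -> R^o}.

Section Chains.
Variable R : realType.

(* Points of V = R^n (standard inner product <u,v> = u *m v^T). *)
Local Notation pt n := 'rV[R]_n.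
Local Notation kvec n k := (kvec R n k).

Definition enorm (n : nat) (u : pt n) : R := Num.sqrt ((u *m u^T) 0 0).

(* increasing enumeration of S, as a map 'I_k -> 'I_n *)
Definition kenum (n k : nat) (S : ksub n k) (j : 'I_k) : 'I_n :=
  enum_val (cast_ord (esym (eqP (valP S))) j).

(* w_1 /\ ... /\ w_k where w_i is the i-th row of W. *)
Definition wedge (n k : nat) (W : 'M[R]_(k, n)) : kvec n k :=
  [ffun S => \det (colsub (@kenum n k S) W)].

(* A simple k-vector is c *: (w_1 /\ ... /\ w_k); the scalar c only matters for
   k = 0 (where every scalar is a simple 0-vector).  Its mass:
   M(c w_1/\.../\w_k) = |c| sqrt(det <w_i,w_j>). *)
Definition smass (n k : nat) (c : R) (W : 'M[R]_(k, n)) : R :=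
  `|c| * Num.sqrt (\det (W *m W^T)).

(* Specification of the operator perp : Lambda_k -> Lambda_{n-k}: linear, and on
   every nonzero simple k-vector alpha it returns a simple (n-k)-vector whose
   vectors are orthogonal to those of alpha (hence span the orthogonal complement,
   since the mass is nonzero), with the same mass, and with alpha /\ perp alpha a
   positive multiple of e_1 /\ ... /\ e_n. *)
Definition perp_spec (n k : nat) (hk : (k <= n)%N)
  (L : kvec n k -> kvec n (n - k)%N) : Prop :=
  (forall (a : R) (x y : kvec n k), L (a *: x + y) = a *: L x + L y) /\
  forall (c : R) (W : 'M[R]_(k, n)), c *: wedge W != 0 ->
    exists (d : R) (V : 'M[R]_(n - k, n)),
      [/\ L (c *: wedge W) = d *: wedge V,
          W *m V^T = 0,
          smass d V = smass c W &
          0 < c * d * \det (castmx (subnKC hk, erefl n) (col_mx W V))].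

Definition perp (n k : nat) (hk : (k <= n)%N) : kvec n k -> kvec n (n - k)%N :=
  epsilon (inhabits (fun _ => 0)) (@perp_spec n k hk).

(* Monopolar k-chains: finite formal sums sum_i (p_i; alpha_i). *)
Definition chain (n k : nat) := seq ('rV[R]_n * {ffun ksub n k -> R^o}).

Definition perp_chain (n k : nat) (hk : (k <= n)%N) (P : chain n k)
  : chain n (n - k)%N := [seq (x.1, perp hk x.2) | x <- P].

(* Delta_u = T_u - id on chains *)
Definition Delta (n k : nat) (u : pt n) (P : chain n k) : chain n k :=
  [seq (x.1 + u, x.2) | x <- P] ++ [seq (x.1, - x.2) | x <- P].

Definition DeltaU (n k : nat) (U : seq (pt n)) (P : chain n k) : chain n k :=
  foldr (@Delta n k) P U.

(* k-forms: linear functionals on monopolar k-chains, i.e. functions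
   omega(p; alpha) linear in alpha, extended additively to formal sums. *)
Definition is_form (n k : nat) (w : pt n -> kvec n k -> R) : Prop :=
  forall p (a : R) (x y : kvec n k), w p (a *: x + y) = a * w p x + w p y.

Definition eval (n k : nat) (w : pt n -> kvec n k -> R) (P : chain n k) : R :=
  \sum_(x <- P) w x.1 x.2.

Definition normj (n k : nat) (w : pt n -> kvec n k -> R) (j : nat) : \bar R :=
  ereal_sup [set z | exists (U : seq (pt n)) (p : pt n) (c : R) (W : 'M[R]_(k, n)),
    [/\ size U = j,
        (\prod_(u <- U) enorm u) * smass c W = 1 &
        z = (`| eval w (DeltaU U [:: (p, c *: wedge W)]) |)%:E]].

Definition natnorm_form (n k r : nat) (w : pt n -> kvec n k -> R) : \bar R :=
  \big[maxe/-oo%E]_(j < r.+1) normj w j.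

Definition natnorm_chain (n k r : nat) (Q : chain n k) : \bar R :=
  ereal_sup [set z | exists w : pt n -> kvec n k -> R,
    [/\ is_form w, w <> (fun _ _ => 0),
        (natnorm_form r w < +oo)%E &
        z = (eval w Q / fine (natnorm_form r w))%:E]].

End Chains.

(* Main.v *)
Require Import Defs.
From HB Require Import structures.
From mathcomp Require Import all_boot all_order all_algebra.
From mathcomp Require Import all_classical all_reals ereal.
From mathcomp Require Import ring lra zify.
From Stdlib Require Import ClassicalEpsilon.

Set Implicit Arguments.
Unset Strict Implicit.
Unset Printing Implicit Defensive.
Import Order.TTheory GRing.Theory Num.Theory.
Local Open Scope ring_scope.

Section K.
Variable R : realType.

Lemma kenum_in n q (S : ksub n q) i : kenum S i \in val S.
Proof. by rewrite /kenum; apply: enum_valP. Qed.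

Lemma kenum_inj n q (S : ksub n q) : injective (kenum S).
Proof. by move=> i j /enum_val_inj /cast_ord_inj. Qed.

Lemma kenum_onto n q (S : ksub n q) j : j \in val S -> exists i, kenum S i = j.
Proof.
move=> Hj; exists (cast_ord (eqP (valP S)) (enum_rank_in Hj j)).
by rewrite /kenum cast_ordK enum_rankK_in.
Qed.

Definition Emx n q (S : ksub n q) : 'M[R]_(q, n) :=
  \matrix_(i, j) ((kenum S i == j)%:R).

Lemma sum_kenum n q (S : ksub n q) (f : 'I_n -> R) j :
  \sum_(l < q) f (kenum S l) * (kenum S l == j)%:R = (j \in val S)%:R * f j.
Proof.
case: (boolP (j \in val S)) => Hj.
  have [i0 Hi0] := kenum_onto Hj.
  rewrite (bigD1 i0) //= Hi0 eqxx big1 ?addr0 ?mulr1 ?mul1r // => l Hl.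
  by rewrite -Hi0 (inj_eq (@kenum_inj _ _ S)) (negbTE Hl) mulr0.
rewrite mul0r big1 // => l _.
case: eqP => [Hl|]; last by rewrite mulr0.
by move: (kenum_in S l); rewrite Hl (negbTE Hj).
Qed.

Lemma sum_delta n (f : 'I_n -> R) a :
  \sum_(j < n) (a == j)%:R * f j = f a.
Proof.
rewrite (bigD1 a) //= eqxx mul1r big1 ?addr0 // => j Hj.
by rewrite eq_sym (negbTE Hj) mul0r.
Qed.

Lemma mul_Emx_tr n q p (X : 'M[R]_(p, n)) (S : ksub n q) :
  X *m (Emx S)^T = colsub (kenum S) X.
Proof.
apply/matrixP => i l; rewrite !mxE.
rewrite (eq_bigr (fun j => (kenum S l == j)%:R * X i j)); last first.
  by move=> j _; rewrite !mxE mulrC.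
by rewrite sum_delta.
Qed.

Lemma Emx_tr_E n q (S : ksub n q) : Emx S *m (Emx S)^T = 1%:M.
Proof.
rewrite mul_Emx_tr; apply/matrixP => i j; rewrite !mxE.
by rewrite (inj_eq (@kenum_inj _ _ S)).
Qed.

Lemma Emx_disj n q p (S : ksub n q) (T : ksub n p) :
  val T = ~: val S -> Emx S *m (Emx T)^T = 0.
Proof.
move=> D; rewrite mul_Emx_tr; apply/matrixP => i j; rewrite !mxE.
case: eqP => // H; move: (kenum_in S i) (kenum_in T j); rewrite H D inE => ->.
by [].
Qed.

Lemma colsub_split n q t p (X : 'M[R]_(p, n)) (S : ksub n q) (T : ksub n t) :
  val T = ~: val S ->
  X = colsub (kenum S) X *m Emx S + colsub (kenum T) X *m Emx T.
Proof.
move=> HT; apply/matrixP => i j; rewrite !mxE.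
rewrite (eq_bigr (fun l => X i (kenum S l) * (kenum S l == j)%:R)); last first.
  by move=> l _; rewrite !mxE.
rewrite [X in _ = _ + X](eq_bigr (fun l => X i (kenum T l) * (kenum T l == j)%:R)); last first.
  by move=> l _; rewrite !mxE.
rewrite (sum_kenum S (fun j => X i j)) (sum_kenum T (fun j => X i j)) HT inE.
by case: (j \in val S); rewrite /= ?mul1r ?mul0r ?addr0 ?add0r.
Qed.

End K.

Section G.
Variable R : realType.

Lemma posdef_det p (G : 'M[R]_p) : G^T = G ->
  (forall x : 'rV_p, x != 0 -> 0 < (x *m G *m x^T) 0 0) -> 0 < \det G.
Proof.
elim: p G => [|p IH] G Gs Gp; first by rewrite det_mx00.
pose G' : 'M[R]_(1 + p) := G.
pose a := ulsubmx G'; pose b := ursubmx G'; pose c := dlsubmx G'; pose D := drsubmx G'.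
have Gp' : forall x : 'rV[R]_(1 + p), x != 0 -> 0 < (x *m G' *m x^T) 0 0 := Gp.
have GE : G' = block_mx a b c D by rewrite submxK.
have bc : b = c^T by rewrite /b /c trmx_dlsub -/G' /G' Gs.
have DD : D^T = D by rewrite /D trmx_drsub /G' Gs.
pose al := a 0 0.
have aE : a = al%:M by rewrite {1}(mx11_scalar a).
have alp : 0 < al.
  have x0 : (row_mx (1 : 'M[R]_1) (0 : 'M_(1, p)) : 'rV_(1 + p)) != 0.
    by rewrite row_mx_eq0 negb_and oner_eq0.
  have := Gp' _ x0; rewrite GE tr_row_mx mul_row_block mul_row_col.
  by rewrite !mul0mx !mul1mx !addr0 trmx0 trmx1 mulmx1 mulmx0 addr0.
have alnz : al != 0 by rewrite gt_eqF.
pose S := D - al^-1 *: (c *m b).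
pose Lm : 'M[R]_(1 + p) := block_mx 1 0 (- (al^-1 *: c)) 1.
have LG : Lm *m G' *m Lm^T = block_mx a 0 0 S.
  rewrite GE /Lm mulmx_block !mul1mx !mul0mx ?addr0 ?add0r.
  rewrite tr_block_mx !trmx1 !trmx0 mulmx_block !mulmx1 !mulmx0 ?addr0 ?add0r.
  have e1 : - (al^-1 *: c) *m a + c = 0.
    by rewrite aE mulNmx -scalemxAl mul_mx_scalar scalerA mulVf // scale1r addNr.
  have e2 : a *m (- (al^-1 *: c))^T + b = 0.
    rewrite aE mul_scalar_mx linearN /= linearZ /= scalerN scalerA mulfV //.
    by rewrite scale1r bc addNr.
  have e3 : - (al^-1 *: c) *m b + D = S.
    by rewrite /S addrC mulNmx -scalemxAl.
  by rewrite e1 e2 e3 mul0mx add0r.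
have detL : \det Lm = 1 by rewrite /Lm det_lblock !det1 mulr1.
have detG : \det G = al * \det S.
  have := congr1 determinant LG; rewrite !det_mulmx det_tr detL mul1r mulr1.
  by rewrite det_ublock aE det_scalar1 => <-.
rewrite detG mulr_gt0 // IH //.
  rewrite /S linearD /= DD linearN /= linearZ /= trmx_mul -bc.
  by rewrite bc trmxK.
move=> y y0.
have x0 : row_mx (0 : 'M_(1,1)) y *m Lm != 0.
  rewrite mulmx_free_eq0 ?row_mx_eq0 ?eqxx //.
  by rewrite row_free_unit unitmxE detL unitr1.
have key : (row_mx 0 y *m Lm) *m G' *m (row_mx 0 y *m Lm)^T =
  row_mx (0 : 'M_(1,1)) y *m (Lm *m G' *m Lm^T) *m (row_mx (0 : 'M_(1,1)) y)^T.
  by rewrite trmx_mul !mulmxA.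
have := Gp' _ x0; rewrite key.
rewrite LG mul_row_block !mulmx0 !mul0mx !addr0 !add0r tr_row_mx trmx0.
by rewrite mul_row_col mul0mx add0r.
Qed.

Lemma gram_pos n p (X : 'M[R]_(p, n)) : row_free X -> 0 < \det (X *m X^T).
Proof.
move=> fX; apply: posdef_det; first by rewrite trmx_mul trmxK.
move=> x x0; rewrite !mulmxA -mulmxA -trmx_mul.
have : x *m X != 0 by rewrite mulmx_free_eq0.
move: (x *m X) => u u0; rewrite mxE.
have [j uj] : exists j, u 0 j != 0.
  apply/existsP; apply: contraR u0 => /existsPn H; apply/eqP/matrixP => i j.
  by rewrite (ord1 i) mxE; apply/eqP; have := H j; rewrite negbK.
rewrite (bigD1 j) //= mxE ltr_pwDl //.
  by rewrite lt_def sqrf_eq0 uj /= sqr_ge0.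
by apply: sumr_ge0 => i _; rewrite mxE -expr2 sqr_ge0.
Qed.

End G.

Section R3.
Variable R : realType.

Lemma wedge_free n k (c : R) (W : 'M[R]_(k, n)) :
  c *: wedge W != 0 -> row_free W.
Proof.
apply: contraR => nfW; apply/eqP/ffunP => S; rewrite !ffunE.
rewrite -mul_Emx_tr; apply/eqP; rewrite scaler_eq0; apply/orP; right.
  apply: contraR nfW => H; have : (W *m (Emx R S)^T) \in unitmx by rewrite unitmxE unitfE.
  rewrite -row_free_unit => /eqP rk; rewrite /row_free eqn_leq rank_leq_row /= -{1}rk; exact: mxrankM_maxl.
Qed.

Lemma free_gram_unit n p (X : 'M[R]_(p, n)) : row_free X ->
  X *m X^T \in unitmx.
Proof. by move=> /gram_pos H; rewrite unitmxE unitfE gt_eqF. Qed.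

Lemma complement_ex n p q (X : 'M[R]_(p, n)) : (p + q = n)%N -> row_free X ->
  exists Y : 'M[R]_(q, n), X *m Y^T = 0 /\ row_free Y.
Proof.
move=> e fX.
have rk : \rank (kermx X^T) = q.
  by rewrite mxrank_ker mxrank_tr (eqP fX) -e addKn.
have sub : (row_base (kermx X^T) *m X^T = 0).
  by apply/sub_kermxP; rewrite eq_row_base.
have fr := row_base_free (kermx X^T).
move: (row_base (kermx X^T)) sub fr; rewrite rk => Y sub fr.
by exists Y; split => //; rewrite -[X]trmxK -trmx_mul sub trmx0.
Qed.

Lemma col_mx_unit n p q (e : (p + q = n)%N) (X : 'M[R]_(p, n)) (Y : 'M[R]_(q, n)) :
  row_free X -> row_free Y -> X *m Y^T = 0 ->
  \det (castmx (e, erefl n) (col_mx X Y)) != 0.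
Proof.
move: X Y; case: n / e => X Y fX fY XY; rewrite castmx_id.
rewrite -unitfE -unitmxE -row_free_unit -kermx_eq0; apply/rowV0P => v.
move/sub_kermxP; rewrite -[v]hsubmxK mul_row_col => H.
have YX : Y *m X^T = 0 by rewrite -[Y]trmxK -trmx_mul XY trmx0.
have H1 : lsubmx v *m (X *m X^T) = 0.
  by have := congr1 (mulmx^~ X^T) H; rewrite /= mulmxDl -!mulmxA YX mulmx0 addr0 mul0mx.
have l0 : lsubmx v = 0.
  by apply/eqP; rewrite -(mulmx_free_eq0 _ (_ : row_free (X *m X^T))) ?H1 // row_free_unit free_gram_unit.
move: H; rewrite l0 mul0mx add0r => /eqP; rewrite mulmx_free_eq0 // => /eqP ->.
by rewrite row_mx0.
Qed.

End R3.

Section R4.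
Variable R : realType.

Lemma det_aat k m n (e : (k + m = n)%N) :
  forall (W : 'M[R]_(k, n)) (V : 'M[R]_(m, n)), W *m V^T = 0 ->
  \det (castmx (e, erefl n) (col_mx W V)) ^+ 2 = \det (W *m W^T) * \det (V *m V^T).
Proof.
case: n / e => W V WV; rewrite castmx_id expr2 -{2}det_tr -det_mulmx.
rewrite tr_col_mx mul_col_mx !mul_mx_row WV -block_mxEv det_lblock //.
Qed.

Lemma det_formula k m n (e : (k + m = n)%N) :
  forall (W : 'M[R]_(k, n)) (V : 'M[R]_(m, n)) (T : ksub n m),
  W *m V^T = 0 -> \det (V *m V^T) != 0 ->
  \det (castmx (e, erefl n) (col_mx W (Emx R T))) * \det (castmx (e, erefl n) (col_mx W V))
  = \det (W *m W^T) * \det (colsub (kenum T) V).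
Proof.
case: n / e => W V T WV hV; rewrite !castmx_id.
pose Hm := invmx (V *m V^T); pose H := V^T *m Hm.
have uV : V *m V^T \in unitmx by rewrite unitmxE unitfE.
have dHm : \det Hm != 0 by rewrite det_inv invr_eq0.
have HmT : Hm^T = Hm by rewrite /Hm trmx_inv trmx_mul trmxK.
have C1 : col_mx W (Emx R T) *m row_mx W^T H =
          block_mx (W *m W^T) 0 (Emx R T *m W^T) (Emx R T *m H).
  by rewrite mul_col_mx !mul_mx_row /H mulmxA WV mul0mx -block_mxEv.
have EH : \det (Emx R T *m H) = \det (colsub (kenum T) V) * \det Hm.
  rewrite /H mulmxA det_mulmx -mul_Emx_tr -det_tr trmx_mul trmxK //.
have RH : \det (row_mx W^T H) = \det Hm * \det (col_mx W V).
  rewrite -det_tr tr_row_mx trmxK /H trmx_mul HmT trmxK.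
  have -> : col_mx W (Hm *m V) = block_mx 1 0 0 Hm *m col_mx W V.
    by rewrite mul_block_col !mul1mx !mul0mx addr0 add0r.
  by rewrite det_mulmx det_ublock det1 mul1r.
have := congr1 determinant C1; rewrite det_mulmx det_lblock EH RH => E.
apply: (mulIf dHm); rewrite -!mulrA [\det (col_mx W V) * _]mulrC E //.
Qed.

Lemma det_elim k m n (e : (k + m = n)%N) :
  forall (W : 'M[R]_(k, n)) (S : ksub n k) (T : ksub n m), val S = ~: val T ->
  \det (castmx (e, erefl n) (col_mx W (Emx R T))) =
  \det (colsub (kenum S) W) * \det (castmx (e, erefl n) (col_mx (Emx R S) (Emx R T))).
Proof.
case: n / e => W S T HS; rewrite !castmx_id.
have HT : val T = ~: val S by rewrite HS finset.setCK.
rewrite {1}(colsub_split W HT).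
have -> : col_mx (colsub (kenum S) W *m Emx R S + colsub (kenum T) W *m Emx R T) (Emx R T)
  = block_mx (colsub (kenum S) W) (colsub (kenum T) W) 0 1 *m col_mx (Emx R S) (Emx R T).
  by rewrite mul_block_col mul0mx mul1mx add0r.
by rewrite det_mulmx det_ublock det1 mulr1.
Qed.

End R4.

Section R5.
Variable R : realType.

Lemma scaleRo (a b : R) : (a *: (b : R^o)) = a * b.
Proof. by []. Qed.

Lemma complP k m n (e : (k + m = n)%N) (T : ksub n m) : #|~: val T| == k.
Proof.
have := cardsC (val T); rewrite card_ord (eqP (valP T)) => H.
by apply/eqP; move: H e; lia.
Qed.

Definition cmp k m n (e : (k + m = n)%N) (T : ksub n m) : ksub n k :=
  exist _ (~: val T) (complP e T).

Lemma cmpK k m n (e : (k + m = n)%N) (e' : (m + k = n)%N) (S : ksub n k) :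
  cmp e (cmp e' S) = S.
Proof. by apply: val_inj; rewrite /= finset.setCK. Qed.

Lemma Emx_free n q (S : ksub n q) : row_free (Emx R S).
Proof.
rewrite /row_free eqn_leq rank_leq_row /=.
by rewrite -{1}(mxrank1 R q) -(Emx_tr_E R S) mxrankM_maxl.
Qed.

Definition sgnT k m n (e : (k + m = n)%N) (T : ksub n m) : R :=
  \det (castmx (e, erefl n) (col_mx (Emx R (cmp e T)) (Emx R T))).

Lemma sgnT_neq0 k m n (e : (k + m = n)%N) (T : ksub n m) : sgnT e T != 0.
Proof.
apply: col_mx_unit; rewrite ?Emx_free //.
by apply: Emx_disj; rewrite /= finset.setCK.
Qed.

Definition L0 k m n (e : (k + m = n)%N) (x : kvec R n k) : kvec R n m :=
  [ffun T => x (cmp e T) * sgnT e T].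

Lemma L0_lin k m n (e : (k + m = n)%N) (a : R) (x y : kvec R n k) :
  L0 e (a *: x + y) = a *: L0 e x + L0 e y.
Proof. by apply/ffunP => T; rewrite !ffunE !scaleRo mulrDl mulrA. Qed.

Lemma L0_scale k m n (e : (k + m = n)%N) (a : R) (x : kvec R n k) :
  L0 e (a *: x) = a *: L0 e x.
Proof. by apply/ffunP => T; rewrite !ffunE !scaleRo mulrA. Qed.

Lemma L0_wedge k m n (e : (k + m = n)%N) (W : 'M[R]_(k, n)) (V : 'M[R]_(m, n)) :
  W *m V^T = 0 -> \det (castmx (e, erefl n) (col_mx W V)) != 0 ->
  L0 e (wedge W) =
    (\det (W *m W^T) / \det (castmx (e, erefl n) (col_mx W V))) *: wedge V.
Proof.
move=> WV a0; set a := \det _ in a0 *.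
have hV : \det (V *m V^T) != 0.
  apply: contra a0 => /eqP h; have := det_aat e WV; rewrite -/a h mulr0.
  by move/eqP; rewrite expf_eq0.
apply/ffunP => T; rewrite !ffunE scaleRo /sgnT.
rewrite -(det_elim e W (S := cmp e T)) //.
apply: (mulIf a0); rewrite det_formula //.
  by rewrite mulrAC divfK.
Qed.

Lemma mass_eq (g h a : R) : 0 < g -> 0 <= h -> a != 0 -> a ^+ 2 = g * h ->
  `|g / a| * Num.sqrt h = Num.sqrt g.
Proof.
move=> g0 h0 a0 E; apply/eqP; rewrite -(@eqrXn2 _ 2) // ?mulr_ge0 ?sqrtr_ge0 //.
rewrite exprMn sqr_sqrtr // sqr_sqrtr ?ltW // real_normK ?num_real //.
rewrite expr_div_n E; apply/eqP; field.
  have : a ^+ 2 != 0 by rewrite expf_neq0.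
  by rewrite E mulf_eq0 negb_or => /andP[-> ->].
Qed.

End R5.

Section R6.
Variable R : realType.

Lemma sqr_pos (c : R) : c != 0 -> 0 < c ^+ 2.
Proof. by move=> c0; rewrite lt_def sqrf_eq0 c0 sqr_ge0. Qed.

Lemma L0_spec n k (hk : (k <= n)%N) : perp_spec hk (L0 (R := R) (subnKC hk)).
Proof.
split; first exact: L0_lin.
move=> c W cw0; have fW := wedge_free cw0.
have c0 : c != 0 by apply: contraNneq cw0 => ->; rewrite scale0r.
have [V [WV fV]] := complement_ex (q := (n - k)%N) (subnKC hk) fW.
have a0 := col_mx_unit (subnKC hk) fW fV WV.
have aat := det_aat (subnKC hk) WV.
move: a0 aat; set a := \det _ => a0 aat.
have g0 := gram_pos fW; have h0 := gram_pos fV.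
exists (c * (\det (W *m W^T) / a)), V; split => //.
- by rewrite L0_scale (L0_wedge WV a0) scalerA.
- by rewrite /smass normrM -mulrA mass_eq // ltW.
- have -> : c * (c * (\det (W *m W^T) / a)) * a = c ^+ 2 * \det (W *m W^T).
    by field.
  by rewrite mulr_gt0 // sqr_pos.
Qed.

Lemma same_sign (x y z : R) : `|x| = `|y| -> 0 < x * z -> 0 < y * z -> x = y.
Proof.
move=> N xz yz; have : x ^+ 2 = y ^+ 2.
  have : `|x| ^+ 2 = `|y| ^+ 2 by rewrite N.
  by rewrite !real_normK ?num_real.
move/eqP; rewrite -subr_eq0 subr_sqr mulf_eq0 => /orP[|]; first by rewrite subr_eq0 => /eqP.
rewrite addr_eq0 => /eqP xy; move: xz; rewrite xy mulNr oppr_gt0 => H.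
by move: (lt_trans H yz); rewrite ltxx.
Qed.

Lemma spec_simple n k (hk : (k <= n)%N) L (c : R) (W : 'M[R]_(k, n)) :
  perp_spec hk L -> c *: wedge W != 0 ->
  L (c *: wedge W) = L0 (subnKC hk) (c *: wedge W).
Proof.
move=> [_ Hs] cw0; have [d [V [LE WV ms pos]]] := Hs c W cw0.
have fW := wedge_free cw0; have g0 := gram_pos fW.
have c0 : c != 0 by apply: contraNneq cw0 => ->; rewrite scale0r.
move: pos; set a := \det _ => pos.
have a0 : a != 0 by apply: contraTneq pos => ->; rewrite mulr0 ltxx.
have aat := det_aat (subnKC hk) WV; rewrite -/a in aat.
have d0 : d != 0 by apply: contraTneq pos => ->; rewrite mulr0 mul0r ltxx.
have hp : 0 < \det (V *m V^T).
  have : 0 < `|d| * Num.sqrt (\det (V *m V^T)).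
    by have := ms; rewrite /smass => ->; rewrite mulr_gt0 ?normr_gt0 ?sqrtr_gt0.
  by rewrite pmulr_rgt0 ?normr_gt0 // sqrtr_gt0.
rewrite LE L0_scale (L0_wedge WV a0) scalerA; congr (_ *: _).
apply: (@same_sign _ _ (c * a)).
- apply: (mulIf (_ : Num.sqrt (\det (V *m V^T)) != 0)); first by rewrite gt_eqF ?sqrtr_gt0.
  by move: ms; rewrite /smass => ->; rewrite normrM -mulrA mass_eq // ltW.
- by rewrite mulrCA mulrA.
- have -> : c * (\det (W *m W^T) / a) * (c * a) = c ^+ 2 * \det (W *m W^T) by field.
  by rewrite mulr_gt0 // sqr_pos.
Qed.

Lemma wedge_Emx n q (S S' : ksub n q) : wedge (Emx R S) S' = (S' == S)%:R.
Proof.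
rewrite ffunE -mul_Emx_tr; case: eqP => [-> | ne]; first by rewrite Emx_tr_E det1.
have : ~~ (val S' \subset val S).
  apply/negP => sub; apply: ne; apply: val_inj; apply/setP.
  by apply/subset_cardP => //; rewrite (eqP (valP S)) (eqP (valP S')).
case/subsetPn => j jS' jS; have [l0 hl] := kenum_onto jS'.
rewrite -det_tr; apply/eqP/det0P; exists (delta_mx 0 l0).
  apply/eqP => /matrixP /(_ 0 l0); rewrite !mxE !eqxx /= => /eqP.
  by rewrite oner_eq0.
rewrite -rowE mul_Emx_tr; apply/rowP => i; rewrite !mxE hl.
by case: eqP => // E; move: (kenum_in S i); rewrite E (negbTE jS).
Qed.

Lemma kvec_decomp n q (x : kvec R n q) :
  x = \sum_(S : ksub n q) x S *: wedge (Emx R S).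
Proof.
apply/ffunP => S'; rewrite sum_ffunE (bigD1 S') //= ffunE scaleRo wedge_Emx eqxx mulr1.
rewrite big1 ?addr0 // => S ne; rewrite ffunE scaleRo wedge_Emx.
by rewrite eq_sym (negbTE ne) mulr0.
Qed.

Lemma perp_unique n k (hk : (k <= n)%N) (L : kvec R n k -> kvec R n (n - k)%N) :
  perp_spec hk L -> L = L0 (subnKC hk).
Proof.
move=> Hsp; have [Hl _] := Hsp; apply: funext => x.
have L00 : L 0 = 0.
  by have := Hl (-1) 0 0; rewrite scaler0 addr0 scaleN1r addNr.
have LD : {morph L : u v / u + v}.
  by move=> u v; have := Hl 1 u v; rewrite !scale1r.
have LZ : forall (a : R) u, L (a *: u) = a *: L u.
  by move=> a u; have := Hl a u 0; rewrite !addr0 L00 addr0.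
have L0D : {morph L0 (R := R) (subnKC hk) : u v / u + v}.
  by move=> u v; have := L0_lin (subnKC hk) 1 u v; rewrite !scale1r.
have L000 : L0 (R := R) (subnKC hk) 0 = 0 by apply/ffunP => T; rewrite !ffunE mul0r.
rewrite (kvec_decomp x) (big_morph L LD L00) (big_morph _ L0D L000).
  apply: eq_bigr => S _; rewrite LZ L0_scale.
  have w0 : 1 *: wedge (Emx R S) != 0.
    by apply/eqP => /ffunP /(_ S); rewrite ffunE scale1r wedge_Emx eqxx ffunE; apply/eqP; rewrite oner_eq0.
  by have := spec_simple Hsp w0; rewrite !scale1r => ->.
Qed.

Lemma L0_onto n k (hk : (k <= n)%N) (d : R) (V : 'M[R]_(n - k, n)) :
  d *: wedge V != 0 -> exists (c : R) (W : 'M[R]_(k, n)),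
    L0 (subnKC hk) (c *: wedge W) = d *: wedge V /\ smass c W = smass d V.
Proof.
move=> dw0; have fV := wedge_free dw0.
have d0 : d != 0 by apply: contraNneq dw0 => ->; rewrite scale0r.
have [W [VW fW]] := complement_ex (q := k) (subnK hk) fV.
have WV : W *m V^T = 0 by rewrite -[W]trmxK -trmx_mul VW trmx0.
have a0 := col_mx_unit (subnKC hk) fW fV WV.
have aat := det_aat (subnKC hk) WV.
move: a0 aat; set a := \det _ => a0 aat.
have g0 := gram_pos fW; have h0 := gram_pos fV.
exists (d * (a / \det (W *m W^T))), W; split.
- rewrite L0_scale (L0_wedge WV a0) scalerA; congr (_ *: _).
  have fl : forall x y z : R, y != 0 -> z != 0 -> x * (y / z) * (z / y) = x.
    by move=> x y z y0 z0; field; apply/andP.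
  by apply: fl => //; rewrite gt_eqF.
- rewrite /smass normrM -mulrA; congr (_ * _).
  have -> : a / \det (W *m W^T) = \det (V *m V^T) / a.
    have fl2 : forall x y z : R, x != 0 -> y != 0 -> x ^+ 2 = y * z -> x / y = z / x.
      by move=> x y z x0 y0 E; apply/eqP; rewrite eqr_div // -expr2 E mulrC.
    by apply: fl2 => //; rewrite gt_eqF.
  by rewrite mass_eq // ?ltW // aat mulrC.
Qed.

End R6.

Section R7.
Variable R : realType.

Definition mapc n k m (f : kvec R n k -> kvec R n m) (Q : chain R n k) : chain R n m :=
  [seq (x.1, f x.2) | x <- Q].

Lemma map_DeltaU n k m (f : kvec R n k -> kvec R n m) U (Q : chain R n k) :
  (forall x, f (- x) = - f x) ->
  DeltaU U (mapc f Q) = mapc f (DeltaU U Q).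
Proof.
move=> fN; elim: U => [//|u U IH] /=; rewrite IH /Delta /mapc map_cat.
by rewrite -!map_comp; congr (_ ++ _); apply: eq_map => x /=; rewrite ?fN.
Qed.

Lemma eval_map n k m (w : 'rV[R]_n -> kvec R n m -> R) (f : kvec R n k -> kvec R n m) Q :
  Defs.eval w (mapc f Q) = Defs.eval (fun p x => w p (f x)) Q.
Proof. by rewrite /Defs.eval big_map. Qed.

Lemma eval_DeltaU0 n k (w : 'rV[R]_n -> kvec R n k -> R) U p :
  is_form w -> Defs.eval w (DeltaU U [:: (p, 0)]) = 0.
Proof.
move=> fw.
have w0 : forall q, w q 0 = 0.
  by move=> q; have := fw q (-1) 0 0; rewrite scaler0 addr0 mulN1r addNr.
have : all (fun x : 'rV[R]_n * kvec R n k => x.2 == 0) (DeltaU U [:: (p, 0 : kvec R n k)]).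
  elim: U => [|u U IH] /=; first by rewrite eqxx.
  rewrite /Delta all_cat !all_map; apply/andP; split; apply: sub_all IH => x /= /eqP ->.
    by [].
  by rewrite oppr0.
move=> H; rewrite /Defs.eval big1_seq // => x /andP[_ xin].
by move/allP: H => /(_ _ xin) /eqP ->; rewrite w0.
Qed.

Lemma unit_simple n q : (q <= n)%N -> smass 1 (pid_mx q : 'M[R]_(q, n)) = 1.
Proof.
move=> hq; rewrite /smass normr1 mul1r tr_pid_mx pid_mx_id // pid_mx_1 det1.
by rewrite sqrtr1.
Qed.

Lemma prod_enorm_ge0 n (U : seq 'rV[R]_n) : 0 <= \prod_(u <- U) enorm u.
Proof. by apply: prodr_ge0 => u _; rewrite /enorm sqrtr_ge0. Qed.

Definition nset n k (w : 'rV[R]_n -> kvec R n k -> R) (j : nat) :=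
  [set z | exists (U : seq 'rV[R]_n) (p : 'rV[R]_n) (c : R) (W : 'M[R]_(k, n)),
    [/\ size U = j,
        (\prod_(u <- U) enorm u) * smass c W = 1 &
        z = (`| Defs.eval w (DeltaU U [:: (p, c *: wedge W)]) |)%:E]]%classic.

Lemma nset_ge0 n k (w : 'rV[R]_n -> kvec R n k -> R) j (U : seq 'rV[R]_n) (p : 'rV[R]_n) :
  (k <= n)%N -> size U = j -> \prod_(u <- U) enorm u != 0 ->
  (0 <= ereal_sup (nset w j))%E.
Proof.
move=> hk sU pU; apply: le_ereal_sup_tmp.
exists (`| Defs.eval w (DeltaU U [:: (p, (\prod_(u <- U) enorm u)^-1 *: wedge (pid_mx k : 'M[R]_(k, n)))]) |)%:E.
  exists U, p, (\prod_(u <- U) enorm u)^-1, (pid_mx k); split => //.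
  rewrite /smass normrV ?unitfE // ger0_norm ?prod_enorm_ge0 //.
  have := unit_simple hk; rewrite /smass normr1 mul1r => ->.
  by rewrite mulr1 mulfV.
by rewrite lee_fin.
Qed.

Section Map.
Variables (n k m : nat) (hk : (k <= n)%N) (hm : (m <= n)%N).
Variables (L : kvec R n k -> kvec R n m) (Li : kvec R n m -> kvec R n k).
Hypothesis HL : forall a x y, L (a *: x + y) = a *: L x + L y.
Hypothesis HLi : forall a x y, Li (a *: x + y) = a *: Li x + Li y.
Hypothesis LLi : forall y, L (Li y) = y.
Hypothesis LiL : forall x, Li (L x) = x.
Hypothesis P1 : forall c (W : 'M[R]_(k, n)), c *: wedge W != 0 ->
  exists d (V : 'M[R]_(m, n)), L (c *: wedge W) = d *: wedge V /\ smass d V = smass c W.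
Hypothesis P2 : forall d (V : 'M[R]_(m, n)), d *: wedge V != 0 ->
  exists c (W : 'M[R]_(k, n)), L (c *: wedge W) = d *: wedge V /\ smass c W = smass d V.

Lemma L_0 : L 0 = 0.
Proof. by have := HL (-1) 0 0; rewrite scaler0 addr0 scaleN1r addNr. Qed.

Lemma L_N x : L (- x) = - L x.
Proof. by have := HL (-1) x 0; rewrite addr0 L_0 addr0 !scaleN1r. Qed.

Lemma eval_simple (w : 'rV[R]_n -> kvec R n m -> R) U p x :
  Defs.eval (fun p x => w p (L x)) (DeltaU U [:: (p, x)]) =
  Defs.eval w (DeltaU U [:: (p, L x)]).
Proof.
have -> : [:: (p, L x)] = mapc L [:: (p, x)] by [].
by rewrite map_DeltaU ?eval_map //; exact: L_N.
Qed.

Lemma normj_map (w : 'rV[R]_n -> kvec R n m -> R) j :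
  is_form w -> normj (fun p x => w p (L x)) j = normj w j.
Proof.
move=> fw; have fw' : is_form (fun p x => w p (L x)).
  by move=> p a x y; rewrite HL fw.
apply/eqP; rewrite eq_le; apply/andP; split.
  apply: ge_ereal_sup => z [U [p [c [W [sU pm ->]]]]].
  have pU : \prod_(u <- U) enorm u != 0.
    by apply: contra_eq_neq pm => ->; rewrite mul0r eq_sym oner_neq0.
  case: (eqVneq (c *: wedge W) 0) => cw.
    rewrite eval_simple cw L_0 eval_DeltaU0 // normr0.
    exact: (nset_ge0 w p hm sU pU).
  have [d [V [LE ms]]] := P1 cw.
  apply: ereal_sup_ubound; exists U, p, d, V; split => //; first by rewrite ms.
  by rewrite eval_simple LE.
apply: ge_ereal_sup => z [U [p [d [V [sU pm ->]]]]].
have pU : \prod_(u <- U) enorm u != 0.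
  by apply: contra_eq_neq pm => ->; rewrite mul0r eq_sym oner_neq0.
case: (eqVneq (d *: wedge V) 0) => dv.
  rewrite dv eval_DeltaU0 // normr0.
  exact: (nset_ge0 (fun p x => w p (L x)) p hk sU pU).
have [c [W [LE ms]]] := P2 dv.
apply: ereal_sup_ubound; exists U, p, c, W; split => //; first by rewrite ms.
by rewrite eval_simple LE.
Qed.

Lemma natnorm_map (w : 'rV[R]_n -> kvec R n m -> R) r :
  is_form w -> natnorm_form r (fun p x => w p (L x)) = natnorm_form r w.
Proof. by move=> fw; apply: eq_bigr => j _; rewrite normj_map. Qed.

Lemma natnorm_chain_map r (P : chain R n k) :
  natnorm_chain r (mapc L P) = natnorm_chain r P.
Proof.
rewrite /natnorm_chain; congr ereal_sup; apply/seteqP; split => z.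
  case=> w [fw nz fin ->]; exists (fun p x => w p (L x)); split.
  - by move=> p a x y; rewrite HL fw.
  - move=> H; apply: nz; apply: funext => p; apply: funext => y.
    by rewrite -(LLi y); have := congr1 (fun f => f p (Li y)) H.
  - by rewrite natnorm_map.
  - by rewrite eval_map natnorm_map.
case=> v [fv nz fin ->].
have fw : is_form (fun p y => v p (Li y)) by move=> p a x y; rewrite HLi fv.
have vE : (fun p x => (fun p y => v p (Li y)) p (L x)) = v.
  by apply: funext => p; apply: funext => x /=; rewrite LiL.
exists (fun p y => v p (Li y)); split => //.
- move=> H; apply: nz; apply: funext => p; apply: funext => x.
  by rewrite -(LiL x); have := congr1 (fun f => f p (L x)) H.
- by rewrite -(natnorm_map _ fw) vE.
- by rewrite eval_map -(natnorm_map _ fw) vE.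
Qed.

End Map.
End R7.

Section R8.
Variable R : realType.

Definition L0inv k m n (e : (k + m = n)%N) (e' : (m + k = n)%N) (y : kvec R n m) : kvec R n k :=
  [ffun S => y (cmp e' S) / sgnT R e (cmp e' S)].

Lemma L0inv_lin k m n (e : (k + m = n)%N) (e' : (m + k = n)%N) (a : R) x y :
  L0inv e e' (a *: x + y) = a *: L0inv e e' x + L0inv e e' y.
Proof. by apply/ffunP => S; rewrite !ffunE !scaleRo mulrDl mulrA. Qed.

Lemma L0K k m n (e : (k + m = n)%N) (e' : (m + k = n)%N) y :
  L0 e (L0inv e e' y) = y.
Proof.
apply/ffunP => T; rewrite !ffunE (cmpK e' e) divfK //; exact: sgnT_neq0.
Qed.

Lemma L0invK k m n (e : (k + m = n)%N) (e' : (m + k = n)%N) x :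
  L0inv e e' (L0 e x) = x.
Proof.
apply/ffunP => S; rewrite !ffunE (cmpK e e') mulfK //; exact: sgnT_neq0.
Qed.

End R8.

Theorem mainTheorem8 (R : realType) (n k r : nat) (hk : (k <= n)%N)
  (P : chain R n k) :
  natnorm_chain r (perp_chain hk P) = natnorm_chain r P.
Proof.
have Hs : perp_spec (R := R) hk (perp hk).
  exact: (epsilon_spec _ _ (ex_intro _ _ (L0_spec R hk))).
have E := perp_unique Hs.
have -> : perp_chain hk P = mapc (L0 (subnKC hk)) P by rewrite /perp_chain E.
apply: (@natnorm_chain_map R n k (n - k)%N hk (leq_subr k n) (L0 (subnKC hk))
          (L0inv (subnKC hk) (subnK hk))).
- exact: L0_lin.
- exact: L0inv_lin.
- exact: L0K.
- exact: L0invK.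
- move=> c W cw; have [_ H2] := L0_spec R hk.
  by have [d [V [? _ ? _]]] := H2 c W cw; exists d, V.
- exact: L0_onto.
Qed.
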